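(* For every boolean function $f:\{-1,1\}^n\to\{-1,1\}$ and every $\epsilon\in(0,\tfrac12)$, $$\sum_{S\subseteq[n]}|\hat f(S)|^{2(1+\epsilon)}\ge 1-(3\epsilon+2\epsilon^2)I(f)-\sum_{k=1}^n\Big(\Big(\frac{I_k(f)}{4}\Big)^{-\epsilon}-1\Big)I_k(f),$$ where terms with $I_k(f)=0$ in the last sum are interpreted as $0$.
   Context: Let $x$ be uniform on $\{-1,1\}^n$; $\mu_k$ flips the $k$-th coordinate; $I_k(f)=\mathbb{P}_x[f(x)\neq f(\mu_k(x))]$, $I(f)=\sum_k I_k(f)$; $\hat f(S)=\mathbb{E}_x[f(x)\prod_{k\in S}x_k]$ for $S\subseteq[n]$. *)

(* Defs.v *)
From HB Require Import structures.
From mathcomp Require Import all_boot all_order all_algebra.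
From mathcomp Require Import reals exp.
Set Implicit Arguments. Unset Strict Implicit. Unset Printing Implicit Defensive.
Import Order.TTheory GRing.Theory Num.Theory.
Local Open Scope ring_scope.

(* A point of {-1,1}^n is encoded by x : {ffun 'I_n -> bool};
   its k-th coordinate is (-1)^(x k), i.e. true <-> -1, false <-> 1. *)
Definition cube (n : nat) := {ffun 'I_n -> bool}.

Definition coord {R : realType} {n : nat} (x : cube n) (k : 'I_n) : R :=
  (-1) ^+ (x k).

Definition flip {n : nat} (k : 'I_n) (x : cube n) : cube n :=
  [ffun i => if i == k then ~~ x i else x i].

Definition is_boolean_fun {R : realType} {n : nat} (f : cube n -> R) : Prop :=
  forall x, f x = 1 \/ f x = -1.

Definition infl {R : realType} {n : nat} (f : cube n -> R) (k : 'I_n) : R :=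
  (#|[set x : cube n | f x != f (flip k x)]|%:R) / (2 ^+ n).

Definition total_infl {R : realType} {n : nat} (f : cube n -> R) : R :=
  \sum_(k < n) infl f k.

Definition fourier {R : realType} {n : nat} (f : cube n -> R) (S : {set 'I_n}) : R :=
  (\sum_(x : cube n) f x * \prod_(k in S) coord x k) / (2 ^+ n).

(* Main.v *)
Require Import Defs.
From HB Require Import structures.
From mathcomp Require Import all_boot all_order all_algebra.
From mathcomp Require Import reals exp.
From mathcomp Require Import ring lra.
From mathcomp Require Import sequences.
Import Order.TTheory GRing.Theory Num.Theory.
Local Open Scope ring_scope.
Set Implicit Arguments. Unset Strict Implicit.

Section Fourier.
Variable R : realType.
Variable n : nat.
Local Notation coord := (@Defs.coord R n).

Definition chi (S : {set 'I_n}) (x : cube n) : R := \prod_(k in S) coord x k.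

Lemma coordE (x : cube n) k : coord x k = (if x k then -1 else 1 : R).
Proof. by rewrite /coord; case: (x k); rewrite ?expr1 ?expr0. Qed.

Lemma sum_prod_set (c : 'I_n -> R) :
  \sum_(S : {set 'I_n}) \prod_(k in S) c k = \prod_(k < n) (c k + 1).
Proof.
rewrite bigA_distr; apply: eq_bigr => S _.
by rewrite big_mkcond.
Qed.

Lemma chi_orth (x y : cube n) :
  \sum_(S : {set 'I_n}) chi S x * chi S y = if x == y then 2 ^+ n else 0.
Proof.
under eq_bigr => S _ do rewrite /chi -big_split /=.
rewrite sum_prod_set.
case: eqP => [->|/eqP neq].
  rewrite (eq_bigr (fun _ => 2)) ?prodr_const ?card_ord // => k _.
  by rewrite !coordE; case: (y k); rewrite ?mulrNN mulr1.
have [k hk] : exists k, x k != y k.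
  apply/existsP; move: neq; apply: contraR; rewrite negb_exists => /forallP H.
  by apply/eqP/ffunP => k; move: (H k); rewrite negbK => /eqP.
rewrite (bigD1 k) //= !coordE.
by move: hk; case: (x k); case: (y k) => //= _; rewrite ?mulrN1 ?mulN1r ?opprK addNr mul0r.
Qed.

Lemma N_gt0 : (0 : R) < 2 ^+ n.
Proof. by rewrite exprn_gt0. Qed.

Lemma plancherel0 (a b : cube n -> R) :
  \sum_(S : {set 'I_n}) (\sum_x a x * chi S x) * (\sum_y b y * chi S y) =
  2 ^+ n * \sum_x a x * b x.
Proof.
transitivity (\sum_(S : {set 'I_n}) \sum_x \sum_y a x * b y * (chi S x * chi S y)).
  apply: eq_bigr => S _; rewrite big_distrl /=; apply: eq_bigr => x _.
  rewrite big_distrr /=; apply: eq_bigr => y _; ring.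
rewrite exchange_big big_distrr /=; apply: eq_bigr => x _.
rewrite exchange_big /=.
rewrite (bigD1 x) //= [X in _ + X]big1 ?addr0.
  by rewrite -mulr_sumr chi_orth eqxx mulrC.
move=> y /negbTE hy.
by rewrite -mulr_sumr chi_orth eq_sym hy mulr0.
Qed.

Lemma plancherel (f g : cube n -> R) :
  \sum_(S : {set 'I_n}) fourier f S * fourier g S =
  (\sum_(x : cube n) f x * g x) / 2 ^+ n.
Proof.
have N0 : (2 : R) ^+ n != 0 by rewrite gt_eqF // N_gt0.
rewrite /fourier.
under eq_bigr => S _ do rewrite mulrACA.
rewrite -big_distrl /= plancherel0.
by field.
Qed.

End Fourier.

Section Bool.
Variable R : realType.
Variable n : nat.
Local Notation coord := (@Defs.coord R n).
Variable f : cube n -> R.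
Hypothesis hf : is_boolean_fun f.

Lemma card_cube : #|{: cube n}| = (2 ^ n)%N.
Proof. by rewrite card_ffun card_bool card_ord. Qed.

Lemma fsq x : f x * f x = 1.
Proof. by case: (hf x) => ->; rewrite ?mulr1 ?mulrNN ?mulr1. Qed.

Lemma parseval : \sum_(S : {set 'I_n}) fourier f S ^+ 2 = 1.
Proof.
under eq_bigr => S _ do rewrite expr2.
rewrite plancherel (eq_bigr (fun _ => 1)); last by move=> x _; rewrite fsq.
rewrite sumr_const card_cube natrX mulfV // gt_eqF // exprn_gt0 //.
Qed.

Lemma flipK k : involutive (@flip n k).
Proof.
move=> x; apply/ffunP => i; rewrite !ffunE.
by case: eqP => // _; rewrite negbK.
Qed.

Lemma chi_flip (k : 'I_n) (S : {set 'I_n}) (x : cube n) :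
  chi R S (flip k x) = (if k \in S then -1 else 1) * chi R S x.
Proof.
rewrite /chi; case: ifP => kS.
  rewrite (bigD1 k) //= [in RHS](bigD1 k) //= mulrA; congr (_ * _).
    by rewrite !coordE ffunE eqxx; case: (x k) => /=; rewrite ?mulrN1 ?opprK ?mulr1.
  apply: eq_bigr => j /andP [_ jk].
  by rewrite !coordE ffunE (negbTE jk).
rewrite mul1r; apply: eq_bigr => j jS.
have jk : j != k by apply: contraTneq jS => ->; rewrite kS.
by rewrite !coordE ffunE (negbTE jk).
Qed.

Lemma fourier_flip (k : 'I_n) (S : {set 'I_n}) :
  fourier (fun x => f (flip k x)) S = (if k \in S then -1 else 1) * fourier f S.
Proof.
rewrite /fourier mulrA; congr (_ / _).
rewrite (reindex_inj (inv_inj (flipK k))) /= big_distrr /=.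
apply: eq_bigr => x _; rewrite flipK.
have -> : \prod_(j in S) Defs.coord (flip k x) j = chi R S (flip k x) by [].
by rewrite chi_flip /chi mulrCA.
Qed.

Lemma sum_flip (k : 'I_n) :
  \sum_x f x * f (flip k x) =
  2 ^+ n - 2 * #|[set x : cube n | f x != f (flip k x)]|%:R.
Proof.
rewrite (eq_bigr (fun x => 1 - 2 * (f x != f (flip k x))%:R)); last first.
  have d1 : ((1:R) == -1) = false by apply/negP => /eqP h; lra.
  have d2 : ((-1:R) == 1) = false by apply/negP => /eqP h; lra.
  move=> x _; case: (hf x) => ->; case: (hf (flip k x)) => ->;
    rewrite ?eqxx ?d1 ?d2 /=; lra.
rewrite sumrB sumr_const card_cube natrX -mulr_sumr; congr (_ - 2 * _).
rewrite -sum1_card natr_sum [RHS]big_mkcond /=; apply: eq_bigr => x _.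
by rewrite inE; case: (f x != _).
Qed.

Lemma infl_sum (k : 'I_n) :
  infl f k = \sum_(S : {set 'I_n} | k \in S) fourier f S ^+ 2.
Proof.
have N0 : (2 : R) ^+ n != 0 by rewrite gt_eqF // exprn_gt0.
have h1 : \sum_(S : {set 'I_n}) (if k \in S then -1 else 1) * fourier f S ^+ 2
   = (2 ^+ n - 2 * #|[set x | f x != f (flip k x)]|%:R) / 2 ^+ n.
  rewrite -sum_flip -plancherel; apply: eq_bigr => S _.
  by rewrite fourier_flip expr2 mulrCA.
have h2 := parseval.

rewrite (bigID (fun S : {set 'I_n} => k \in S)) /= in h1.
rewrite (bigID (fun S : {set 'I_n} => k \in S)) /= in h2.
have eA : \sum_(S : {set 'I_n} | k \in S) (if k \in S then -1 else 1) * fourier f S ^+ 2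
   = - \sum_(S : {set 'I_n} | k \in S) fourier f S ^+ 2.
  by rewrite -sumrN; apply: eq_bigr => S kS; rewrite kS mulN1r.
have eB : \sum_(S : {set 'I_n} | k \notin S) (if k \in S then -1 else 1) * fourier f S ^+ 2
   = \sum_(S : {set 'I_n} | k \notin S) fourier f S ^+ 2.
  by apply: eq_bigr => S kS; rewrite (negbTE kS) mul1r.
rewrite eA eB in h1.
have -> : infl f k = (1 - (2 ^+ n - 2 * #|[set x | f x != f (flip k x)]|%:R) / 2 ^+ n) / 2.
  rewrite /infl; field; exact: N0.
rewrite -h1; lra.
Qed.
End Bool.

Section Analytic.
Variable R : realType.

Lemma ln_le_sub1 (x : R) : 0 < x -> ln x <= x - 1.
Proof.
move=> x0; have h : -1 < x - 1 by lra.
by have := le_ln1Dx h; rewrite addrCA subrr addr0.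
Qed.

Lemma pow_bound (a eps : R) : 0 <= eps ->
  a ^+ 2 + eps * (a ^+ 2 * ln (a ^+ 2)) <= powR `|a| (2 * (1 + eps)).
Proof.
move=> e0.
have [->|a0] := eqVneq a 0.
  rewrite normr0 powR0 ?expr0n /= ?mul0r ?mulr0 ?addr0 //; lra.
have pa : 0 < `|a| by rewrite normr_gt0.
rewrite /powR gt_eqF // -(real_normK (num_real a)).
rewrite lnXn //.
have -> : 2 * (1 + eps) * ln `|a| = 2 * ln `|a| + 2 * eps * ln `|a| by ring.
rewrite expRD.
have -> : expR (2 * ln `|a|) = `|a| ^+ 2.
  by rewrite -[2]/(2%:R) expRM_natl lnK.
have h := expR_ge1Dx (2 * eps * ln `|a|).
have sq0 : 0 <= `|a| ^+ 2 by rewrite sqr_ge0.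
have := ler_wpM2l sq0 h.
set L := ln `|a|; set A := `|a| ^+ 2.
have -> : A * (1 + 2 * eps * L) = A + eps * (A * (L *+ 2)).
  by rewrite mulr2n; ring.
by rewrite mulrA.
Qed.

Lemma ln_prod n (F : 'I_n -> R) : (forall i, 0 < F i) ->
  ln (\prod_(i < n) F i) = \sum_(i < n) ln (F i).
Proof.
move=> Fpos.
suff : 0 < \prod_(i < n) F i /\ ln (\prod_(i < n) F i) = \sum_(i < n) ln (F i) by case.
apply: (big_ind2 (fun p s => 0 < p /\ ln p = s)).
- by rewrite ln1.
- move=> p1 s1 p2 s2 [h1 e1] [h2 e2]; split; first exact: mulr_gt0.
  by rewrite lnM ?posrE // e1 e2.
- by move=> i _; split.
Qed.

Lemma gibbs_term (w q : R) : 0 <= w -> 0 <= q -> (0 < w -> 0 < q) ->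
  - (w * ln w) <= - (w * ln q) + q - w.
Proof.
move=> w0 q0 wq.
have [->|wp] := eqVneq w 0; first by rewrite !mul0r oppr0; lra.
have wpos : 0 < w by rewrite lt_def wp.
have qpos := wq wpos.
have := ln_le_sub1 (divr_gt0 qpos wpos).
rewrite ln_div ?posrE // => h.
have := ler_wpM2l w0 h.
have -> : w * (q / w - 1) = q - w by field.
lra.
Qed.

Lemma one_minus_bound (I : R) : 0 <= I <= 1 -> - ((1 - I) * ln (1 - I)) <= I.
Proof.
case/andP => I0 I1.
have [e|ne] := eqVneq I 1; first by rewrite e subrr mul0r oppr0.
have p : 0 < 1 - I by rewrite subr_gt0 lt_def eq_sym ne.
have ip : 0 < (1 - I)^-1 by rewrite invr_gt0.
have := ln_le_sub1 ip; rewrite lnV ?posrE // => h.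
have := ler_wpM2l (ltW p) h.
have -> : (1 - I) * ((1 - I)^-1 - 1) = I by field; rewrite subr_eq0 eq_sym.
lra.
Qed.

Lemma final_term (I eps : R) : 0 <= I -> 0 < eps ->
  eps * (- (I * ln I) + I) <=
  (3 * eps + 2 * eps ^+ 2) * I +
  (if I == 0 then 0 else (powR (I / 4) (- eps) - 1) * I).
Proof.
move=> I0 e0.
have [->|ne] := eqVneq I 0; first by rewrite !mul0r oppr0 add0r mulr0 mulr0 addr0.
have Ip : 0 < I by rewrite lt_def ne.
have I4 : 0 < I / 4 by rewrite divr_gt0.
rewrite /powR gt_eqF // ln_div ?posrE //.
have l4 : 0 <= ln (4 : R) by rewrite ln_ge0 //; lra.
have h := expR_ge1Dx (- eps * (ln I - ln 4)).
have := ler_wpM2r I0 h.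
set E := expR _ => hE.
have : 0 <= eps * ln 4 * I by rewrite mulr_ge0 // mulr_ge0 //; lra.
have : 0 <= eps ^+ 2 * I by rewrite mulr_ge0 // sqr_ge0.
move: hE; set L := ln I; set L4 := ln 4 => hE h1 h2.
have e : (1 + - eps * (L - L4)) * I = I - eps * (I * L) + eps * L4 * I by ring.
rewrite e in hE.
nra.
Qed.

End Analytic.

Section Entropy.
Variable R : realType.
Variable n : nat.
Variable f : cube n -> R.
Hypothesis hf : is_boolean_fun f.

Local Notation w S := (fourier f S ^+ 2).

Lemma infl_compl (k : 'I_n) :
  1 - infl f k = \sum_(S : {set 'I_n} | k \notin S) w S.
Proof.
rewrite (infl_sum hf) -(parseval hf).
rewrite (bigID (fun S : {set 'I_n} => k \in S)) /=; lra.
Qed.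

Lemma sum_ge_term (P : pred {set 'I_n}) (S : {set 'I_n}) : P S ->
  w S <= \sum_(T : {set 'I_n} | P T) w T.
Proof.
move=> PS; rewrite (bigD1 S) //= lerDl.
by apply: sumr_ge0 => T _; rewrite sqr_ge0.
Qed.

Lemma infl_range (k : 'I_n) : 0 <= infl f k <= 1.
Proof.
have h1 : 0 <= infl f k by rewrite (infl_sum hf); apply: sumr_ge0 => T _; rewrite sqr_ge0.
have h2 : 0 <= 1 - infl f k by rewrite infl_compl; apply: sumr_ge0 => T _; rewrite sqr_ge0.
apply/andP; split; lra.
Qed.

Lemma entropy_bound :
  - \sum_(S : {set 'I_n}) w S * ln (w S) <=
  \sum_(k < n) (- (infl f k * ln (infl f k)) + infl f k).
Proof.
pose I k := infl f k.
pose fac (S : {set 'I_n}) (k : 'I_n) := if k \in S then I k else 1 - I k.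
pose q S := \prod_(k < n) fac S k.
have fac0 S k : 0 <= fac S k.
  by rewrite /fac; case: ifP => _; have := infl_range k; rewrite /I; case/andP => ? ?; lra.
have facpos S k : 0 < w S -> 0 < fac S k.
  move=> wp; rewrite /fac /I; case: ifP => kS.
    by apply: (lt_le_trans wp); rewrite (infl_sum hf); apply: sum_ge_term.
  by apply: (lt_le_trans wp); rewrite infl_compl; apply: sum_ge_term; rewrite kS.
have sumq : \sum_S q S = 1.
  rewrite /q -(bigA_distr _ _ (fun k => I k) (fun k => 1 - I k)) /=.
  by rewrite big1 // => k _; rewrite addrC subrK.
have step1 : - \sum_S w S * ln (w S) <= - \sum_S w S * ln (q S).
  have : \sum_S - (w S * ln (w S)) <= \sum_S (- (w S * ln (q S)) + q S - w S).
    apply: ler_sum => S _; apply: gibbs_term; rewrite ?sqr_ge0 //.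
      by apply: prodr_ge0 => k _.
    by move=> wp; apply: prodr_gt0 => k _; apply: facpos.
  rewrite sumrB big_split /= sumq (parseval hf) -!sumrN; lra.
have step2 : \sum_S w S * ln (q S) =
    \sum_(k < n) (I k * ln (I k) + (1 - I k) * ln (1 - I k)).
  transitivity (\sum_S \sum_(k < n) w S * ln (fac S k)).
    apply: eq_bigr => S _.
    have [w0|wp] := eqVneq (w S) 0.
      by rewrite w0 mul0r big1 // => k _; rewrite mul0r.
    have wpos : 0 < w S by rewrite lt_def wp sqr_ge0.
    by rewrite /q ln_prod ?mulr_sumr // => k; apply: facpos.
  rewrite exchange_big /=; apply: eq_bigr => k _.
  rewrite (bigID (fun S : {set 'I_n} => k \in S)) /=.
  congr (_ + _).
    rewrite /I [X in X * ln _](infl_sum hf) mulr_suml; apply: eq_bigr => S kS.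
    by rewrite /fac kS mulrC.
  rewrite /I [X in X * ln _]infl_compl mulr_suml; apply: eq_bigr => S kS.
  by rewrite /fac (negbTE kS) mulrC.
rewrite step2 in step1.
apply: (le_trans step1); rewrite -sumrN; apply: ler_sum => k _.
have := one_minus_bound (infl_range k); rewrite /I; lra.
Qed.

End Entropy.

Unset Implicit Arguments.
Set Strict Implicit.

Theorem mainTheorem9 (R : realType) (n : nat) (f : cube n -> R)
  (hf : is_boolean_fun f) (eps : R) (heps0 : 0 < eps) (heps1 : eps < 1 / 2) :
  \sum_(S : {set 'I_n}) powR `|fourier f S| (2 * (1 + eps))
  >= 1 - (3 * eps + 2 * eps ^+ 2) * total_infl f
       - \sum_(k < n)
           (if infl f k == 0 then 0
            else (powR (infl f k / 4) (- eps) - 1) * infl f k).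
Proof.
set Ent := \sum_(S : {set 'I_n}) fourier f S ^+ 2 * ln (fourier f S ^+ 2).
set T := \sum_(k < n) (- (infl f k * ln (infl f k)) + infl f k).
set G := \sum_(k < n) (if infl f k == 0 then 0
            else (powR (infl f k / 4) (- eps) - 1) * infl f k).
have hA : 1 + eps * Ent <= \sum_(S : {set 'I_n}) powR `|fourier f S| (2 * (1 + eps)).
  have -> : 1 + eps * Ent = \sum_(S : {set 'I_n}) (fourier f S ^+ 2 +
      eps * (fourier f S ^+ 2 * ln (fourier f S ^+ 2))).
    by rewrite big_split /= (parseval hf) /Ent mulr_sumr.
  by apply: ler_sum => S _; apply: pow_bound; exact: ltW.
have hE : - Ent <= T by exact: entropy_bound.
have hT : eps * T <= (3 * eps + 2 * eps ^+ 2) * total_infl f + G.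
  rewrite /T /G /total_infl mulr_sumr mulr_sumr -big_split /=.
  apply: ler_sum => k _; apply: final_term => //.
  by case/andP: (infl_range hf k).
have : eps * (- Ent) <= eps * T by rewrite ler_wpM2l // ltW.
rewrite /ge; lra.
Qed.
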